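(* Let $q$ be a prime power, $3\le n\le q$, and let $\boldsymbol\alpha=(\alpha_1,\dots,\alpha_n)$ consist of pairwise distinct elements of $\mathbb F_q$. The Reed–Solomon code $\mathrm{RS}_{\boldsymbol\alpha}(n,2)$ has insdel distance $2n-4$ if and only if the following holds: for every $\mathbf i=(i_1,i_2,i_3),\mathbf j=(j_1,j_2,j_3)\in S_3(n)$ with $d_H(\mathbf i,\mathbf j)\ge 2$, there is no pair $(a,b)\in\mathbb F_q^*\times\mathbb F_q$ with $a\alpha_{i_\ell}+b=\alpha_{j_\ell}$ for all $\ell=1,2,3$.
   Context: $\mathrm{RS}_{\boldsymbol\alpha}(n,k)=\{(f(\alpha_1),\dots,f(\alpha_n)): f\in\mathbb F_q[x],\ \deg f<k\}$. $S_3(n)=\{(i_1,i_2,i_3)\in\{1,\dots,n\}^3: i_1<i_2<i_3\}$, and $d_H(\mathbf i,\mathbf j)$ is the number of coordinates in which $\mathbf i$ and $\mathbf j$ differ. For $\mathbf u,\mathbf v\in\mathbb F_q^n$, the insdel distance $d_I(\mathbf u,\mathbf v)$ is the minimum number of insertions and deletions transforming $\mathbf u$ into $\mathbf v$; equivalently $2n-2\ell_{\rm LCS}(\mathbf u,\mathbf v)$ with $\ell_{\rm LCS}$ the length of a longest common subsequence. The insdel distance of a code is the minimum over distinct codewords. *)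

(* Defs.v *)
From mathcomp Require Import all_boot all_order all_algebra.
Set Implicit Arguments. Unset Strict Implicit. Unset Printing Implicit Defensive.
Import GRing.Theory.
Local Open Scope ring_scope.

(* Length of a longest common subsequence of u and v: every subsequence of u
   is  mask m u  for some bit mask m of length size u. *)
Definition lcs_len (T : eqType) (u v : seq T) : nat :=
  (\max_(m : (size u).-tuple bool | subseq (mask m u) v) size (mask m u))%N.

Definition insdel_dist (T : eqType) (u v : seq T) : nat :=
  (size u + size v - 2 * lcs_len u v)%N.

Definition code_insdel_dist (T : eqType) (C : seq T -> Prop) (d : nat) : Prop :=
  (exists u v, [/\ C u, C v, u <> v & insdel_dist u v = d]) /\
  (forall u v, C u -> C v -> u <> v -> (d <= insdel_dist u v)%N).

Definition RS (F : fieldType) (n : nat) (alpha : 'I_n -> F) (k : nat)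
  (c : seq F) : Prop :=
  exists p : {poly F}, (size p <= k)%N /\ c = [seq p.[alpha i] | i <- enum 'I_n].

Definition incr3 (n : nat) (i : 'I_3 -> 'I_n) : bool :=
  ((i (@Ordinal 3 0 isT) < i (@Ordinal 3 1 isT)) &&
   (i (@Ordinal 3 1 isT) < i (@Ordinal 3 2 isT)))%N.

Definition dH3 (n : nat) (i j : 'I_3 -> 'I_n) : nat := #|[set l : 'I_3 | i l != j l]|.

(* Main.v *)
Require Import Defs.
From mathcomp Require Import all_boot all_order all_algebra.
From mathcomp Require Import ring zify.
Import GRing.Theory.
Set Implicit Arguments. Unset Strict Implicit.
Local Open Scope ring_scope.

Lemma lcs_ge (T : eqType) (u v s : seq T) :
  subseq s u -> subseq s v -> (size s <= lcs_len u v)%N.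
Proof.
case/subseqP => m sm -> sv.
rewrite /lcs_len.
have sm' : size m == size u by rewrite sm.
exact: (@leq_bigmax_cond _ _ (fun t : (size u).-tuple bool => size (mask t u))
          (Tuple sm')).
Qed.

Lemma lcs_le (T : eqType) (u v : seq T) k :
  (forall s, subseq s u -> subseq s v -> (size s <= k)%N) -> (lcs_len u v <= k)%N.
Proof.
move=> H; apply/bigmax_leqP => t sv; apply: H => //; exact: mask_subseq.
Qed.

Lemma sorted_sub (T : eqType) (e : rel T) (s t : seq T) :
  transitive e -> irreflexive e ->
  sorted e s -> sorted e t -> {subset s <= t} -> subseq s t.
Proof.
move=> tr ir; elim: t s => [|y t IH] [|x s] //=.
- by move=> _ _ /(_ x); rewrite inE eqxx => /(_ isT).
- move=> ss st sub.
  have allx := order_path_min tr ss.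
  have ally := order_path_min tr st.
  have st' : sorted e t by apply: path_sorted st.
  have ss' : sorted e s by apply: path_sorted ss.
  case: eqP => [exy|nxy].
  + subst y; apply: IH => // z zs.
    have := sub z; rewrite !inE zs orbT => /(_ isT) /orP [/eqP zx|//].
    by subst z; move/allP: allx => /(_ x zs); rewrite ir.
  + apply: IH => //= z; rewrite inE => /orP [/eqP ->|zs].
    * by have := sub x; rewrite !inE eqxx /= => /(_ isT) /orP [/eqP/nxy|].
    * have := sub z; rewrite !inE zs orbT => /(_ isT) /orP [/eqP zy|//].
      subst z.
      have xt : x \in t by have := sub x; rewrite !inE eqxx /= => /(_ isT) /orP [/eqP/nxy|].
      move/allP: ally => /(_ x xt) yx.
      move/allP: allx => /(_ y zs) xy.
      by have := tr _ _ _ yx xy; rewrite ir.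
Qed.

Definition ordlt (n : nat) : rel 'I_n := fun i j => (val i < val j)%N.

Lemma sorted_enum_ord n : sorted (@ordlt n) (enum 'I_n).
Proof.
have := iota_ltn_sorted 0 n; rewrite -val_enum_ord sorted_map.
by apply: sub_sorted.
Qed.

Lemma sub_enum n (r : seq 'I_n) : sorted (@ordlt n) r -> subseq r (enum 'I_n).
Proof.
move=> sr; apply: sorted_sub sr (sorted_enum_ord n) _.
- by move=> a b c; apply: ltn_trans.
- by move=> a; rewrite /ordlt ltnn.
- by move=> x _; rewrite mem_enum.
Qed.

Lemma hor2 (F : fieldType) (p : {poly F}) x : (size p <= 2)%N -> p.[x] = p`_0 + p`_1 * x.
Proof.
move=> sp; rewrite (horner_coef_wide _ sp) !big_ord_recr big_ord0 /=.
by rewrite add0r expr0 expr1 mulr1.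
Qed.

Lemma fix2 (F : fieldType) (a b x x' : F) : x != x' ->
  a * x + b = x -> a * x' + b = x' -> a = 1 /\ b = 0.
Proof.
move=> nx e1 e2.
have E : (a - 1) * (x - x') = 0.
  by rewrite -[RHS](subrr (x - x')) -{2}e1 -{2}e2; ring.
move/eqP: E; rewrite mulf_eq0 !subr_eq0 (negbTE nx) orbF => /eqP a1.
split=> //; move: e1; rewrite a1 mul1r => /(canRL (addKr x)).
by rewrite addrC subrr.
Qed.

Lemma key (F : fieldType) (x1 x2 x3 y1 y2 y3 f0 f1 g0 g1 : F) :
  x1 != x2 -> y1 != y2 ->
  f0 + f1 * x1 = g0 + g1 * y1 ->
  f0 + f1 * x2 = g0 + g1 * y2 ->
  f0 + f1 * x3 = g0 + g1 * y3 ->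
  ~ (f0 = g0 /\ f1 = g1) ->
  exists a b, [/\ a != 0, a * x1 + b = y1, a * x2 + b = y2, a * x3 + b = y3
     & ~ (a = 1 /\ b = 0)].
Proof.
move=> nx ny e1 e2 e3 nfg.
have [g10|g1n0] := eqVneq g1 0.
  exfalso; apply: nfg; subst g1.
  have E : f1 * (x1 - x2) = 0.
    have -> : f1 * (x1 - x2) = (f0 + f1*x1) - (f0 + f1*x2) by ring.
    by rewrite e1 e2 !mul0r subrr.
  move/eqP: E; rewrite mulf_eq0 subr_eq0 (negbTE nx) orbF => /eqP f10.
  by move: e1; rewrite f10 !mul0r !addr0.
have rel y x : f0 + f1 * x = g0 + g1 * y -> (f1 / g1) * x + (f0 - g0) / g1 = y.
  move=> e; have -> : y = ((g0 + g1*y) - g0)/g1 by field.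
  by rewrite -e; field.
exists (f1 / g1), ((f0 - g0) / g1); split; try exact: rel.
- rewrite mulf_neq0 // ?invr_eq0 //; apply/eqP => f10.
  move: e1 e2; rewrite f10 !mul0r addr0 => e1; rewrite e1 => /addrI /mulfI.
  by move=> /(_ g1n0) /eqP; rewrite (negbTE ny).
- case=> a1 b0; apply: nfg; split.
    by move: b0 => /eqP; rewrite mulf_eq0 invr_eq0 (negbTE g1n0) orbF subr_eq0 => /eqP.
  by apply: (mulIf (invr_neq0 g1n0)); rewrite a1 mulfV.
Qed.

Definition word (F : fieldType) n (alpha : 'I_n -> F) (p : {poly F}) :=
  [seq p.[alpha i] | i <- enum 'I_n].

Definition tri n (a b c : 'I_n) : 'I_3 -> 'I_n :=
  fun l => match val l with 0 => a | 1 => b | _ => c end.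

Definition HypT (F : fieldType) n (alpha : 'I_n -> F) :=
  forall i j : 'I_3 -> 'I_n, incr3 i -> incr3 j -> (2 <= dH3 i j)%N ->
      ~ (exists a b : F, a != 0 /\ forall l : 'I_3, a * alpha (i l) + b = alpha (j l)).

Lemma sub3 (F : fieldType) n (alpha : 'I_n -> F) (p : {poly F}) s :
  subseq s (word alpha p) -> size s = 3%N ->
  exists r0 r1 r2 : 'I_n, [/\ (r0 < r1)%N, (r1 < r2)%N &
     s = [:: p.[alpha r0]; p.[alpha r1]; p.[alpha r2]]].
Proof.
case/subseqP => m _ ->; rewrite /word -map_mask size_map.
have : sorted (@ordlt n) (mask m (enum 'I_n)).
  apply: subseq_sorted (mask_subseq _ _) (sorted_enum_ord n).
  by move=> a b c; apply: ltn_trans.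
case: (mask m _) => [|r0 [|r1 [|r2 [|? ?]]]] //= /and3P [h1 h2 _] _.
by exists r0, r1, r2.
Qed.

Lemma upper (F : fieldType) n (alpha : 'I_n -> F) (f g : {poly F}) :
  injective alpha -> (size f <= 2)%N -> (size g <= 2)%N ->
  word alpha f != word alpha g -> HypT alpha ->
  (lcs_len (word alpha f) (word alpha g) <= 2)%N.
Proof.
move=> inj sf sg nfg Hyp; apply: lcs_le => s su sv.
rewrite leqNgt; apply/negP => s3.
have s3' : size (take 3 s) = 3%N by rewrite size_takel.
have [r0 [r1 [r2 [lr1 lr2 er]]]] :=
  sub3 (subseq_trans (take_subseq s 3) su) s3'.
have [q0 [q1 [q2 [lq1 lq2 eq]]]] :=
  sub3 (subseq_trans (take_subseq s 3) sv) s3'.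
rewrite er in eq; case: eq; rewrite !hor2 // => e1 e2 e3.
have neq (u w : 'I_n) : (u < w)%N -> alpha u != alpha w.
  by move=> uw; rewrite (inj_eq inj); apply/eqP => E; rewrite E ltnn in uw.
have nfg' : ~ (f`_0 = g`_0 /\ f`_1 = g`_1).
  case=> h0 h1; move/negP: nfg; apply; apply/eqP/eq_in_map => k _.
  by rewrite !hor2 // h0 h1.
have [a [b [a0 h1 h2 h3 nab]]] := key (neq _ _ lr1) (neq _ _ lq1) e1 e2 e3 nfg'.
pose i := tri r0 r1 r2; pose j := tri q0 q1 q2.
have hall : forall l, a * alpha (i l) + b = alpha (j l).
  by case=> [[|[|[|?]]] ?].
apply: (Hyp i j).
- by rewrite /incr3 /= lr1 lr2.
- by rewrite /incr3 /= lq1 lq2.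
- have ni : forall l l', l != l' -> alpha (i l) != alpha (i l').
    move=> [[|[|[|?]]] ?] [[|[|[|?]]] ?] //= _; rewrite /i /tri /=;
      try (apply: neq => //; exact: ltn_trans lr2);
      rewrite eq_sym; apply: neq => //; exact: ltn_trans lr2.
  have Hd : forall l l', l != l' -> i l = j l -> i l' = j l' -> False.
    move=> l l' nl el el'; apply: nab; apply: (fix2 (ni _ _ nl)).
      by rewrite {2}el hall.
    by rewrite {2}el' hall.
  pose o0 := @Ordinal 3 0 isT; pose o1 := @Ordinal 3 1 isT; pose o2 := @Ordinal 3 2 isT.
  apply/card_gt1P.
  case: (eqVneq (i o0) (j o0)) => [e0|n0].
    exists o1, o2; rewrite !inE; split => //; apply/eqP.
      by move=> e; exact: Hd o0 o1 isT e0 e.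
    by move=> e; exact: Hd o0 o2 isT e0 e.
  case: (eqVneq (i o1) (j o1)) => [e1'|n1].
    exists o0, o2; rewrite !inE; split => //; apply/eqP.
    by move=> e; exact: Hd o1 o2 isT e1' e.
  by exists o0, o1; rewrite !inE.
- by exists a, b.
Qed.

Lemma size_word (F : fieldType) n (alpha : 'I_n -> F) p : size (word alpha p) = n.
Proof. by rewrite size_map size_enum_ord. Qed.

Lemma lin_poly (F : fieldType) (a b : F) :
  (size (Poly [:: b; a]) <= 2)%N /\ forall x, (Poly [:: b; a]).[x] = b + a * x.
Proof.
have s : (size (Poly [:: b; a]) <= 2)%N by apply: leq_trans (size_Poly _) _.
by split=> // x; rewrite hor2 // !coef_Poly.
Qed.

Lemma sub_word (F : fieldType) n (alpha : 'I_n -> F) p (r : seq 'I_n) :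
  sorted (@ordlt n) r -> subseq [seq p.[alpha k] | k <- r] (word alpha p).
Proof. by move=> sr; apply: map_subseq; apply: sub_enum. Qed.

Theorem lemma4p6 (F : finFieldType) (n : nat) (alpha : 'I_n -> F) :
  (3 <= n)%N -> (n <= #|F|)%N -> injective alpha ->
  (code_insdel_dist (RS alpha 2) (2 * n - 4)%N <->
   (forall i j : 'I_3 -> 'I_n, incr3 i -> incr3 j -> (2 <= dH3 i j)%N ->
      ~ (exists a b : F, a != 0 /\ forall l : 'I_3, a * alpha (i l) + b = alpha (j l)))).
Proof.
move=> n3 _ inj.
pose pg := Poly [:: 0; 1 : F].
have [sg eg] := lin_poly (1 : F) 0.
have eg' x : pg.[x] = x by rewrite eg add0r mul1r.
pose o0 := @Ordinal 3 0 isT; pose o1 := @Ordinal 3 1 isT; pose o2 := @Ordinal 3 2 isT.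
split.
- case=> _ Hmin i j ii ij dij [a [b [a0 hab]]].
  have [sf ef] := lin_poly a b.
  have RSf : RS alpha 2 (word alpha (Poly [:: b; a])) by exists (Poly [:: b; a]).
  have RSg : RS alpha 2 (word alpha pg) by exists pg.
  have nuv : word alpha (Poly [:: b; a]) <> word alpha pg.
    move/card_gt1P: dij => [x [y [xin _ _]]]; move: xin; rewrite inE => nij.
    move/eq_in_map => /(_ (i x) (mem_enum _ _)); rewrite ef eg' addrC hab.
    by move/inj/eqP; rewrite eq_sym (negbTE nij).
  have := Hmin _ _ RSf RSg nuv.
  have : (3 <= @lcs_len F (word alpha (Poly [:: b; a])) (word alpha pg))%N.
    have -> : 3%N = size [seq alpha k | k <- [:: j o0; j o1; j o2]] by [].
    apply: lcs_ge.
      have -> : [seq alpha k | k <- [:: j o0; j o1; j o2]] =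
                [seq (Poly [:: b; a]).[alpha k] | k <- [:: i o0; i o1; i o2]].
        by rewrite /= !ef !(addrC b) !hab.
      by apply: sub_word; move: ii; rewrite /incr3 /= /ordlt andbT.
    have -> : [seq alpha k | k <- [:: j o0; j o1; j o2]] =
              [seq pg.[alpha k] | k <- [:: j o0; j o1; j o2]].
      by rewrite /= !eg'.
    by apply: sub_word; move: ij; rewrite /incr3 /= /ordlt andbT.
  rewrite /insdel_dist !size_word. set L := lcs_len _ _. lia.
- move=> Hyp.
  have h0 : (0 < n)%N by apply: leq_trans n3.
  have h1 : (1 < n)%N by apply: leq_trans n3.
  have h2 : (2 < n)%N by [].
  pose p0 := Ordinal h0; pose p1 := Ordinal h1; pose p2 := Ordinal h2.
  have n01 : alpha p1 - alpha p0 != 0 by rewrite subr_eq0 (inj_eq inj).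
  pose a := (alpha p2 - alpha p1) / (alpha p1 - alpha p0).
  pose b := alpha p1 - a * alpha p0.
  have [sf ef] := lin_poly a b.
  have f0 : (Poly [:: b; a]).[alpha p0] = alpha p1 by rewrite ef /b; ring.
  have f1 : (Poly [:: b; a]).[alpha p1] = alpha p2.
    by rewrite ef /b /a; field.
  have up (p q : {poly F}) : (size p <= 2)%N -> (size q <= 2)%N ->
      word alpha p <> word alpha q -> (lcs_len (word alpha p) (word alpha q) <= 2)%N.
    move=> sp sq npq; apply: upper => //; exact/eqP.
  split.
  + exists (word alpha (Poly [:: b; a])), (word alpha pg).
    have nuv : word alpha (Poly [:: b; a]) <> word alpha pg.
      move/eq_in_map => /(_ p0 (mem_enum _ _)); rewrite f0 eg'.
      by move/inj/eqP.
    split => //; first by exists (Poly [:: b; a]).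
      by exists pg.
    have U : (@lcs_len F (word alpha (Poly [:: b; a])) (word alpha pg) <= 2)%N := up _ _ sf sg nuv.
    have L : (2 <= @lcs_len F (word alpha (Poly [:: b; a])) (word alpha pg))%N.
      have -> : 2%N = size [seq alpha k | k <- [:: p1; p2]] by [].
      apply: lcs_ge.
        have -> : [seq alpha k | k <- [:: p1; p2]] =
                  [seq (Poly [:: b; a]).[alpha k] | k <- [:: p0; p1]].
          by rewrite /= f0 f1.
        by apply: sub_word.
      have -> : [seq alpha k | k <- [:: p1; p2]] =
                [seq pg.[alpha k] | k <- [:: p1; p2]].
        by rewrite /= !eg'.
      by apply: sub_word.
    rewrite /insdel_dist !size_word; set LL := lcs_len _ _ in U L *; lia.
  + move=> u v [p [sp ->]] [q [sq ->]] nuv.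
    have U : (@lcs_len F (word alpha p) (word alpha q) <= 2)%N := up _ _ sp sq nuv.
    rewrite /insdel_dist !size_word; set LL := lcs_len _ _ in U *; lia.
Qed.
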